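(* Let $S$ be a finite semigroup such that $\equiv_{\mathsf{RM}}$ is the equality relation. If the action of $S$ on a partial $S$-set $\Omega$ is faithful, then so is the action of $S$ on its semisimplification $\Omega_{ss}$. Moreover, $|\Omega_{ss}|\le|\Omega|$.
   Context: Semigroups act on the right. A regular $\mathscr J$-class is one containing an idempotent. For a regular $\mathscr J$-class $J$: $s\equiv_{\mathsf{RM},J}t$ iff for all $x\in J$, $xs\in J\iff xt\in J$, and if both lie in $J$ then $xs=xt$; $\equiv_{\mathsf{RM}}=\bigcap_J\equiv_{\mathsf{RM},J}$ over regular $J$. A partial $S$-set is a finite set $\Omega$ with a right action by partial maps; faithful means distinct elements act as distinct partial maps. The strong orbit of $\alpha$ is $\mathscr O_\alpha=\{\beta\in\Omega\mid\alpha S^1=\beta S^1\}$; it is null if $\mathscr O_\alpha S\cap\mathscr O_\alpha=\emptyset$ and transitive otherwise. The semisimplification $\Omega_{ss}$ is the set $\{\alpha\in\Omega\mid\alpha\in\alpha S\}$ (the union of transitive strong orbits) with action $\alpha\circ s=\alpha s$ if $\alpha s$ is defined and lies in $\mathscr O_\alpha$, and undefined otherwise. *)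

(* Defs.v *)
From mathcomp Require Import all_boot.
Set Implicit Arguments. Unset Strict Implicit. Unset Printing Implicit Defensive.

Section Semigroup.
Variables (S : finType) (mul : S -> S -> S).

(* multiplication by an element of S^1 = S + {1}, encoded as option S *)
Definition lmul1 (a : option S) (s : S) : S := if a is Some a' then mul a' s else s.
Definition rmul1 (s : S) (b : option S) : S := if b is Some b' then mul s b' else s.

Definition in_ideal (s x : S) : bool :=
  [exists a : option S, exists b : option S, x == rmul1 (lmul1 a s) b].

Definition Jrel (s t : S) : bool := [forall x, in_ideal s x == in_ideal t x].

Definition idempotent (e : S) : bool := mul e e == e.

Definition RM_J (e s t : S) : Prop :=
  forall x, Jrel x e ->
    (Jrel (mul x s) e <-> Jrel (mul x t) e) /\
    (Jrel (mul x s) e -> Jrel (mul x t) e -> mul x s = mul x t).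

(* ==_RM is the intersection over regular J-classes, i.e. J-classes of
   idempotents (a J-class is regular iff it contains an idempotent). *)
Definition RM_rel (s t : S) : Prop :=
  forall e, idempotent e -> RM_J e s t.

Definition RM_is_equality : Prop := forall s t, RM_rel s t -> s = t.

End Semigroup.

Section PartialSet.
Variables (S : finType) (mul : S -> S -> S) (Omega : finType)
          (act : Omega -> S -> option Omega).

Definition is_partial_action : Prop :=
  forall a s t, act a (mul s t) = obind (fun b => act b t) (act a s).

Definition faithful_on (D : {set Omega}) (f : Omega -> S -> option Omega) : Prop :=
  forall s t, (forall a, a \in D -> f a s = f a t) -> s = t.

Definition faithful : Prop := faithful_on [set: Omega] act.

Definition reach (a b : Omega) : bool := (a == b) || [exists s, act a s == Some b].

Definition same_strong_orbit (a b : Omega) : bool :=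
  [forall c, reach a c == reach b c].

Definition Omega_ss : {set Omega} := [set a | [exists s, act a s == Some a]].

Definition act_ss (a : Omega) (s : S) : option Omega :=
  match act a s with
  | Some b => if same_strong_orbit a b then Some b else None
  | None => None
  end.

End PartialSet.

(* Main.v *)
Require Import Defs.
From mathcomp Require Import all_boot.
Set Implicit Arguments. Unset Strict Implicit. Unset Printing Implicit Defensive.

Lemma iter_period (T : finType) (F : T -> T) x :
  exists i p, 0 < p /\ iter (p + i) F x = iter i F x.
Proof.
have := looping_order F x; rewrite /looping => /trajectP [i lti E].
exists i, (order F x - i); split; first by rewrite subn_gt0.
by rewrite subnK ?(ltnW lti).
Qed.

Section Main.
Variables (S : finType) (mul : S -> S -> S) (mulA : associative mul)
  (Omega : finType) (act : Omega -> S -> option Omega)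
  (Hact : is_partial_action mul act).

Definition act1 (g : Omega) (b : option S) : option Omega :=
  if b is Some b' then act g b' else Some g.

Lemma act_rmul1 g z b :
  act g (rmul1 mul z b) = obind (fun d => act1 d b) (act g z).
Proof. by case: b => [b|] /=; rewrite ?Hact //; case: (act g z). Qed.

Lemma reach_refl a : reach act a a.
Proof. by rewrite /reach eqxx. Qed.

Lemma reach_act a u b : act a u = Some b -> reach act a b.
Proof. by move=> E; rewrite /reach; apply/orP; right; apply/existsP; exists u; rewrite E. Qed.

Lemma reach_act1 a u b : act1 a u = Some b -> reach act a b.
Proof. by case: u => [u|] /=; [apply: reach_act | case=> ->; apply: reach_refl]. Qed.

Lemma reach_trans a b c : reach act a b -> reach act b c -> reach act a c.
Proof.
rewrite /reach => /orP [/eqP -> //| /existsP [u /eqP Hu]].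
case/orP => [/eqP <- | /existsP [v /eqP Hv]].
  by apply/orP; right; apply/existsP; exists u; rewrite Hu.
by apply/orP; right; apply/existsP; exists (mul u v); rewrite Hact Hu /= Hv.
Qed.

Lemma same_orbit a b : reach act a b -> reach act b a -> same_strong_orbit act a b.
Proof.
move=> ab ba; apply/forallP => c; apply/eqP; apply/idP/idP => H.
  exact: reach_trans ba H.
exact: reach_trans ab H.
Qed.

Lemma in_ss a s b : act a s = Some b -> reach act b a -> a \in Omega_ss act.
Proof.
move=> Hs; rewrite /reach inE => /orP [/eqP E | /existsP [u /eqP Hu]].
  by apply/existsP; exists s; rewrite Hs E.
by apply/existsP; exists (mul s u); rewrite Hact Hs /= Hu.
Qed.

Lemma iter_none (g : option Omega -> option Omega) (Hg : g None = None) k :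
  iter k g None = None.
Proof. by elim: k => //= k ->. Qed.

Lemma iter_reach f k b d :
  iter k (fun o => obind (fun d => act d f) o) (Some b) = Some d -> reach act b d.
Proof.
elim: k d => [|k IH] d /=; first by case=> ->; apply: reach_refl.
case E: (iter k _ (Some b)) => [c|] //= Hc.
exact: reach_trans (IH _ E) (reach_act Hc).
Qed.

Lemma act_iter f k a y :
  act a (iter k (fun z => mul z f) y) =
  iter k (fun o => obind (fun d => act d f) o) (act a y).
Proof. by elim: k => //= k <-; rewrite Hact. Qed.

Lemma key x s t :
  Jrel mul (mul x s) x ->
  (forall a, a \in Omega_ss act -> act_ss act a s = act_ss act a t) ->
  forall a, act a (mul x s) = act a (mul x t).
Proof.
move=> J Hst.
have : in_ideal mul (mul x s) x.
  move/forallP: J => /(_ x) /eqP ->.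
  by apply/existsP; exists None; apply/existsP; exists None.
case/existsP => a /existsP [b /eqP Hx].
have HAF0 : x = lmul1 mul a (mul x (rmul1 mul s b)).
  by rewrite {1}Hx; case: a {Hx} => [a|]; case: b => [b|] /=; rewrite ?mulA.
have comm0 z g : mul (lmul1 mul a z) g = lmul1 mul a (mul z g).
  by case: a {Hx HAF0} => [a|] //=; rewrite mulA.
have Fx0 : mul x (rmul1 mul s b) = rmul1 mul (mul x s) b.
  by case: b {Hx HAF0} => [b|] //=; rewrite mulA.
pose f := rmul1 mul s b.
pose F := fun z => mul z f.
pose A := lmul1 mul a.
have HAF : x = A (F x) by exact: HAF0.
have comm z : F (A z) = A (F z) by exact: comm0.
have comm1 n z : iter n F (A z) = A (iter n F z) by elim: n => //= n ->; rewrite comm.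
have comm2 m n z : iter n F (iter m A z) = iter m A (iter n F z).
  by elim: m => //= m <-; rewrite comm1.
have Hn n : x = iter n A (iter n F x).
  elim: n => // n IH.
  by rewrite iterSr iterSr -comm1 -HAF.
have [i [p [p0 Hp]]] := iter_period F x.
have Fp : iter p F x = x.
  by rewrite {1}(Hn i) comm2 -iterD Hp -Hn.
case: p p0 Fp {Hp} => // q _; rewrite iterSr.
have -> : F x = rmul1 mul (mul x s) b by exact: Fx0.
move=> Fq al.
rewrite !Hact.
case Hax: (act al x) => [be|] //=.
move: (congr1 (act al) Fq); rewrite act_iter act_rmul1 Hact Hax /=.
case Hbs: (act be s) => [ga|] /=; last by rewrite iter_none.
case Hgb: (act1 ga b) => [de|] /=; last by rewrite iter_none.
move=> /iter_reach Hdb.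
have gb : reach act ga be := reach_trans (reach_act1 Hgb) Hdb.
have bs : be \in Omega_ss act := in_ss Hbs gb.
have := Hst _ bs; rewrite /act_ss Hbs same_orbit //; last exact: reach_act Hbs.
by case: (act be t) => [c|] //; case: ifP.
Qed.

Lemma Jrel_trans u v w : Jrel mul u v -> Jrel mul v w -> Jrel mul u w.
Proof.
move=> /forallP H1 /forallP H2; apply/forallP => y.
by rewrite (eqP (H1 y)) (eqP (H2 y)).
Qed.

Lemma Jrel_sym u v : Jrel mul u v -> Jrel mul v u.
Proof. by move=> /forallP H1; apply/forallP => y; rewrite eq_sym H1. Qed.

End Main.

Theorem proposition2p2 (S : finType) (mul : S -> S -> S)
  (mulA : associative mul)
  (Omega : finType) (act : Omega -> S -> option Omega)
  (Hact : is_partial_action mul act) :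
  RM_is_equality mul ->
  faithful act ->
  faithful_on (Omega_ss act) (act_ss act) /\ #|Omega_ss act| <= #|Omega|.
Proof.
move=> RM Fa; split; last exact: max_card.
move=> s t H.
have H' : forall a, a \in Omega_ss act -> act_ss act a t = act_ss act a s.
  by move=> a aS; rewrite H.
apply: RM => e _ x Jxe.
have ks : Jrel mul (mul x s) x -> mul x s = mul x t.
  by move=> J; apply: Fa => a _; exact: (key mulA Hact J H).
have kt : Jrel mul (mul x t) x -> mul x t = mul x s.
  by move=> J; apply: Fa => a _; exact: (key mulA Hact J H').
split; last by move=> J _; apply: ks; apply: Jrel_trans J (Jrel_sym Jxe).
split=> J.
  by rewrite -(ks (Jrel_trans J (Jrel_sym Jxe))).
by rewrite -(kt (Jrel_trans J (Jrel_sym Jxe))).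
Qed.
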